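(* Let $\lambda\in\mathbb{R}$, let $r\ge s\ge 1$ be integers and let $n\ge 1$ be an integer. Then \[ \phi_{n,\lambda}^{(r,s)}(x)=\frac{1}{e^{x}}\sum_{k=0}^{\infty}\frac{1}{k!}\bigg(\prod_{j=1}^{n}\big[(k+(j-1)(r-s))_s-(n-j)\lambda\big]\bigg)x^{k}. \] In particular, for $x=1$, \[ \phi_{n,\lambda}^{(r,s)}=\frac{1}{e}\sum_{k=0}^{\infty}\frac{1}{k!}\bigg(\prod_{j=1}^{n}\big[(k+(j-1)(r-s))_s-(n-j)\lambda\big]\bigg). \]
   Context: Notation: $(x)_0=1$, $(x)_m=x(x-1)\cdots(x-m+1)$ for $m\ge1$ (falling factorial). Let $D=\frac{d}{dx}$ and let $x$ also denote the operator of multiplication by $x$ (acting on polynomials/smooth functions). The generalized degenerate $(r,s)$-Stirling numbers of the second kind $S_\lambda^{(r,s)}(n,k)$, $0\le k\le ns$, are defined by the operator identity \[ \prod_{k=0}^{n-1}\Big(x^{r}D^{s}-k\lambda\, x^{r-s}\Big)=x^{n(r-s)}\sum_{k=0}^{ns}S_\lambda^{(r,s)}(n,k)\,x^{k}D^{k}, \] where the product of operators is written with the factors $k=0,1,\dots,n-1$ from left to right. The generalized degenerate $(r,s)$-Bell polynomials are $\phi_{n,\lambda}^{(r,s)}(x)=\sum_{k=0}^{ns}S_\lambda^{(r,s)}(n,k)x^k$, and $\phi_{n,\lambda}^{(r,s)}=\phi_{n,\lambda}^{(r,s)}(1)$. *)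

(* Defs.v *)
From HB Require Import structures.
From mathcomp Require Import all_boot all_order all_algebra.
From mathcomp Require Import all_classical all_reals all_analysis.
Set Implicit Arguments. Unset Strict Implicit. Unset Printing Implicit Defensive.
Import Order.TTheory GRing.Theory Num.Theory.
Local Open Scope ring_scope.

Definition stir_factor (R : realType) (r s : nat) (lam : R) (k : nat)
  (p : {poly R}) : {poly R} :=
  'X^r * p^`(s) - (k%:R * lam) *: ('X^(r - s) * p).

(* prod_{k=0}^{n-1} (x^r D^s - k lam x^(r-s)), factors k = 0..n-1 from left to
   right, applied to p:  A_0 (A_1 ( ... (A_{n-1} p))). *)
Definition stir_op (R : realType) (r s : nat) (lam : R) (n : nat)
  (p : {poly R}) : {poly R} :=
  foldr (fun k q => stir_factor r s lam k q) p (iota 0 n).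

(* S : nat -> R are the generalized degenerate (r,s)-Stirling numbers of the
   second kind S_lam^{(r,s)}(n,k), 0 <= k <= ns, i.e. they satisfy the defining
   operator identity (on all polynomials). *)
Definition is_gen_deg_stirling2 (R : realType) (r s : nat) (lam : R) (n : nat)
  (S : nat -> R) : Prop :=
  forall p : {poly R},
    stir_op r s lam n p =
    'X^(n * (r - s)) * \sum_(0 <= k < (n * s).+1) S k *: ('X^k * p^`(k)).

Definition gen_deg_bell (R : realType) (n s : nat) (S : nat -> R) (x : R) : R :=
  \sum_(0 <= k < (n * s).+1) S k * x ^+ k.

Definition bell_series_coef (R : realType) (r s : nat) (lam : R) (n k : nat) : R :=
  (k`!%:R)^-1 *
  \prod_(1 <= j < n.+1) (((k + (j - 1) * (r - s)) ^_ s)%:R - (n - j)%:R * lam).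

(* Main.v *)
Require Import Defs.
From HB Require Import structures.
From mathcomp Require Import all_boot all_order all_algebra.
From mathcomp Require Import all_classical all_reals all_analysis.
From mathcomp Require Import zify ring lra.
Import Order.TTheory GRing.Theory Num.Theory.
Set Implicit Arguments. Unset Strict Implicit.
Import numFieldNormedType.Exports.
Local Open Scope classical_set_scope.
Local Open Scope ring_scope.

Section Alg.
Variable R : realType.

Lemma Xmul_derXn (A B C E : nat) : ((C <= B)%N -> (A + (B - C))%N = E) ->
  'X^A * ('X^(B - C) *+ B ^_ C) = (B ^_ C)%:R *: ('X^E : {poly R}).
Proof.
move=> hE; case: (leqP C B) => hCB.
  by rewrite mulrnAr -exprD hE // scaler_nat.
by rewrite ffact_small // mulr0n mulr0 scale0r.
Qed.

Definition cfk (r s : nat) (lam : R) (a m k : nat) : R :=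
  \prod_(1 <= j < m.+1)
     (((k + (j - 1) * (r - s)) ^_ s)%:R - (a + m - j)%:R * lam).

Lemma cfkS r s lam a m k : cfk r s lam a m.+1 k =
  (((k + m * (r - s)) ^_ s)%:R - a%:R * lam) * cfk r s lam a.+1 m k.
Proof.
rewrite /cfk big_nat_recr //= mulrC subn1 /=.
have -> : (a + m.+1 - m.+1 = a)%N by rewrite addnK.
congr (_ * _); apply: eq_bigr => j _.
by rewrite addSn addnS.
Qed.

Lemma stir_fold_Xn r s lam (hsr : (s <= r)%N) m a k :
  foldr (fun i q => stir_factor r s lam i q) ('X^k : {poly R}) (iota a m) =
  cfk r s lam a m k *: 'X^(k + m * (r - s)).
Proof.
elim: m a => [|m IH] a.
  by rewrite /= /cfk big_geq // scale1r mul0n addn0.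
rewrite /= IH /stir_factor derivnZ derivnXn.
set K := (k + m * (r - s))%N.
rewrite -scalerAr (@Xmul_derXn r K s (k + m.+1 * (r - s))%N); last first.
  move=> hsK; rewrite /K mulSn; lia.
rewrite -scalerAr -exprD (_ : (r - s + K = k + m.+1 * (r - s))%N); last first.
  by rewrite /K mulSn; lia.
rewrite !scalerA -scalerBl cfkS; congr (_ *: _).
by rewrite mulrC mulrBl.
Qed.

Lemma cfk_S r s lam n (hsr : (s <= r)%N) (S : nat -> R)
  (hS : is_gen_deg_stirling2 r s lam n S) k :
  cfk r s lam 0 n k = \sum_(0 <= j < (n * s).+1) S j * (k ^_ j)%:R.
Proof.
have := hS 'X^k; rewrite /stir_op stir_fold_Xn //.
have -> : \sum_(0 <= j < (n * s).+1) S j *: ('X^j * ('X^k)^`(j)) =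
   \sum_(0 <= j < (n * s).+1) (S j * (k ^_ j)%:R) *: ('X^k : {poly R}).
  apply: eq_bigr => j _; rewrite derivnXn (@Xmul_derXn j k j k); last first.
    by move=> h; lia.
  by rewrite scalerA.
rewrite -scaler_suml -scalerAr -exprD addnC => /(congr1 (fun p : {poly R} => p`_(k + n * (r - s)))).
by rewrite !coefZ !coefXn [(n * (r - s) + k)%N]addnC eqxx !mulr1.
Qed.

Lemma bell_coef_cfk r s lam n k :
  bell_series_coef r s lam n k = (k`!%:R)^-1 * cfk r s lam 0 n k.
Proof. by rewrite /bell_series_coef /cfk. Qed.

Definition wj (x : R) (j N : nat) : R :=
  \sum_(0 <= k < N) ((k`!%:R)^-1 * (k ^_ j)%:R * x ^+ k).

Lemma wj_shift x j N : wj x j (N + j) = x ^+ j * series (exp_coeff x) N.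
Proof.
rewrite /wj (@big_cat_nat _ _ _ j) //=; last by rewrite leq_addl.
rewrite big_nat_cond big1 ?add0r; last first.
  by move=> i /andP[/andP[_ hi] _]; rewrite ffact_small // mulr0 mul0r.
rewrite -{1}[j]add0n big_addn addnK /series /= mulr_sumr.
apply: eq_bigr => i _; rewrite /exp_coeff /= exprD.
have hf := ffact_fact (leq_addl i j); rewrite addnK in hf.
rewrite -hf natrM invfM.
have h1 : ((i + j) ^_ j)%:R != 0 :> R by rewrite pnatr_eq0 -lt0n ffact_gt0 leq_addl.
have h2 : (i`!)%:R != 0 :> R by rewrite pnatr_eq0 -lt0n fact_gt0.
by field; rewrite h1 h2.
Qed.

Lemma cvg_wj x j : wj x j @ \oo --> x ^+ j * expR x.
Proof.
rewrite -(cvg_shiftn j).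
have -> : [sequence wj x j (n + j)%N]_n = (fun n => x ^+ j * series (exp_coeff x) n).
  by apply/funext => n /=; rewrite wj_shift.
apply: cvgMl_tmp; exact: is_cvg_series_exp_coeff.
Qed.

End Alg.

Lemma cvg_sumS (R : realType) (F : nat -> nat -> R) (L : nat -> R) (c : nat -> R) (r : seq nat) :
  (forall j, F j @ \oo --> L j) ->
  (fun N => \sum_(j <- r) c j * F j N) @ \oo --> \sum_(j <- r) c j * L j.
Proof.
move=> hF; elim: r => [|j r IH].
  rewrite big_nil; under eq_cvg do rewrite big_nil; exact: cvg_cst.
rewrite big_cons; under eq_cvg do rewrite big_cons.
apply: cvgD => //; apply: cvgMl_tmp; exact: hF.
Qed.

Theorem theorem1 (R : realType) (lam : R) (r s n : nat)
  (hs : (1 <= s)%N) (hsr : (s <= r)%N) (hn : (1 <= n)%N)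
  (S : nat -> R) (hS : is_gen_deg_stirling2 r s lam n S) (x : R) :
  cvgn (fun N => \sum_(0 <= k < N) bell_series_coef r s lam n k * x ^+ k) /\
  gen_deg_bell n s S x =
    (expR x)^-1 * limn (fun N => \sum_(0 <= k < N) bell_series_coef r s lam n k * x ^+ k).
Proof.
have E : (fun N => \sum_(0 <= k < N) bell_series_coef r s lam n k * x ^+ k) =
    (fun N => \sum_(0 <= j < (n * s).+1) S j * wj x j N).
  apply/funext => N; rewrite /wj.
  under [RHS]eq_bigr do rewrite mulr_sumr.
  rewrite exchange_big /=; apply: eq_bigr => k _.
  rewrite bell_coef_cfk (cfk_S hsr hS) mulr_sumr mulr_suml.
  apply: eq_bigr => j _.
by ring.
have C := cvg_sumS (c := S) (r := index_iota 0 (n * s).+1) (fun j => @cvg_wj R x j).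
rewrite E; split; first exact: cvgP C.
rewrite (cvg_lim _ C) // /gen_deg_bell mulr_sumr; apply: eq_bigr => j _.
have h : expR x != 0 by rewrite gt_eqF // expR_gt0.
by field.
Qed.
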